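(* Let $\gamma:Y\to Y$, $\gamma(r,v)=(r,v+1)$ (an isometry of $Y$). There is a function $C(r)>0$ of $r\in[0,\infty)$ such that $$C(r)\,l^{\frac{1}{1+2\alpha}}\le \dist(\gamma^l x,x)\le 3\,l^{\frac{1}{1+2\alpha}}$$ holds for all $x=(r,v)\in Y$ and all $l\in\mathbb{Z}_+$.
   Context: Let $\alpha>0$. Let $Y=[0,\infty)\times\mathbb R$ with coordinates $(r,v)$, equipped with the distance $\dist$ defined as follows: on $(0,\infty)\times\mathbb R$, $\dist$ is the length distance of the incomplete Riemannian metric $g=dr^2+r^{-4\alpha}dv^2$, and $(Y,\dist)$ is the metric completion of $((0,\infty)\times\mathbb R,\dist)$, where the point $(0,v)$ is the limit of $(r,v)$ as $r\to0^+$. *)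

(* Defs.v *)
From Stdlib Require Import Reals.
From Coquelicot Require Import Coquelicot.
Open Scope R_scope.

(* A real function that is C^1 (differentiable everywhere with continuous
   derivative).  Curves are parametrized on [0,1]; any C^1 curve on [0,1]
   extends to a C^1 function on R, so nothing is lost. *)
Definition is_C1 (f : R -> R) : Prop :=
  (forall t, ex_derive f t) /\ (forall t, continuous (Derive f) t).

Definition adm_curve (p q : R * R) (rc vc : R -> R) : Prop :=
  is_C1 rc /\ is_C1 vc /\ (forall t, 0 <= t <= 1 -> 0 < rc t) /\
  rc 0 = fst p /\ vc 0 = snd p /\ rc 1 = fst q /\ vc 1 = snd q.

Definition g_length (alpha : R) (rc vc : R -> R) : R :=
  RInt (fun t => sqrt ((Derive rc t) ^ 2
                       + Rpower (rc t) (-4 * alpha) * (Derive vc t) ^ 2)) 0 1.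

Definition dist0 (alpha : R) (p q : R * R) : R :=
  real (Glb_Rbar (fun L => exists rc vc, adm_curve p q rc vc /\
                                         L = g_length alpha rc vc)).

(* Distance on the metric completion Y = [0,oo) x R, where (0,v) is the limit of
   (r,v) as r -> 0+.  For p = (r1,v1), q = (r2,v2) with r1, r2 >= 0, the points
   (r1 + 1/(n+1), v1) and (r2 + 1/(n+1), v2) converge in Y to p and q, so the
   completion distance is the limit of their dist0 distances. *)
Definition distY (alpha : R) (p q : R * R) : R :=
  real (Lim_seq (fun n => dist0 alpha (fst p + / INR (S n), snd p)
                                       (fst q + / INR (S n), snd q))).

Definition gamma_pow (l : nat) (x : R * R) : R * R := (fst x, snd x + INR l).

(* Main.v *)
Require Import Defs.
From Stdlib Require Import Classical.
From Stdlib Require Import Reals Lra Psatz.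
From Coquelicot Require Import Coquelicot.
Open Scope R_scope.

Definition cl (x : R) := Rmin 1 (Rmax 0 x).
Definition Sm (x : R) := 3 * cl x ^ 2 - 2 * cl x ^ 3.
Definition Sdm (x : R) := 6 * cl x - 6 * cl x ^ 2.

Lemma cl_cases x : (x <= 0 /\ cl x = 0) \/ (0 <= x <= 1 /\ cl x = x) \/ (1 <= x /\ cl x = 1).
Proof.
  unfold cl. destruct (Rle_dec x 0).
  - left. split; auto. rewrite Rmax_left by lra. apply Rmin_right; lra.
  - destruct (Rle_dec x 1).
    + right; left. split; [lra|]. rewrite Rmax_right by lra. apply Rmin_right; lra.
    + right; right. split; [lra|]. rewrite Rmax_right by lra. apply Rmin_left; lra.
Qed.

Lemma S_quad x y : Rabs (Sm y - Sm x - Sdm x * (y - x)) <= 3 * (y - x) ^ 2.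
Proof.
  unfold Sm, Sdm. apply Rabs_le.
  destruct (cl_cases x) as [[hx ex]|[[hx ex]|[hx ex]]]; rewrite ex;
  destruct (cl_cases y) as [[hy ey]|[[hy ey]|[hy ey]]]; rewrite ey; split;
  pose proof (pow2_ge_0 (y - x)) as hq;
  try (assert (0 <= (y-x)^2 * x) by (apply Rmult_le_pos; lra));
  try (assert (0 <= (y-x)^2 * y) by (apply Rmult_le_pos; lra));
  try (assert (0 <= (y-x)^2 * (1-x)) by (apply Rmult_le_pos; lra));
  try (assert (0 <= (y-x)^2 * (1-y)) by (apply Rmult_le_pos; lra));
  try nra.
  all: try (pose proof (pow2_ge_0 ((y - x) - (1-x)*x)); assert (0 <= (1-x)^3*(4 - 3*(1-x))) by (apply Rmult_le_pos; [apply pow_le|]; lra);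
            assert ((1-x)*(1-x) <= (y-x)*(y-x)) by (apply Rmult_le_compat; lra); nra).
  all: try (assert ((1-y)*(1-y) <= (y-x)*(y-x)) by nra; nra).
Qed.

Definition QB (f : R -> R) (d x : R) := exists M, 0 <= M /\ forall y, Rabs (f y - f x - d * (y - x)) <= M * (y - x) ^ 2.

Lemma QB_derive f d x : QB f d x -> is_derive f x d.
Proof.
  intros [M [HM H]]. apply is_derive_Reals. intros eps heps.
  assert (hp : 0 < eps / (M + 1)) by (apply Rdiv_lt_0_compat; lra).
  exists (mkposreal _ hp). intros h hh0 hh. simpl in hh.
  specialize (H (x + h)). replace (x + h - x) with h in H by ring.
  replace ((f (x + h) - f x) / h - d) with ((f (x + h) - f x - d * h) / h) by (field; auto).
  unfold Rdiv. rewrite Rabs_mult, Rabs_inv.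
  assert (ha : 0 < Rabs h) by (apply Rabs_pos_lt; auto).
  apply Rmult_lt_reg_r with (Rabs h); auto.
  rewrite Rmult_assoc, Rinv_l by lra. rewrite Rmult_1_r.
  apply Rle_lt_trans with (M * h ^ 2); auto.
  replace (h ^ 2) with (Rabs h * Rabs h) by (rewrite <- Rabs_mult; simpl; rewrite Rmult_1_r; apply Rabs_right; nra).
  assert (Rabs h * (M + 1) < eps) by (apply Rmult_lt_reg_r with (/ (M+1)); [apply Rinv_0_lt_compat; lra|];
     rewrite Rmult_assoc, Rinv_r by lra; lra).
  nra.
Qed.

Lemma QB_plus f g df dg x : QB f df x -> QB g dg x -> QB (fun t => f t + g t) (df + dg) x.
Proof.
  intros [M1 [h1 H1]] [M2 [h2 H2]]. exists (M1 + M2). split; [lra|]. intros y.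
  replace (f y + g y - (f x + g x) - (df + dg) * (y - x)) with
    ((f y - f x - df * (y - x)) + (g y - g x - dg * (y - x))) by ring.
  eapply Rle_trans; [apply Rabs_triang|]. specialize (H1 y); specialize (H2 y). nra.
Qed.

Lemma QB_const c x : QB (fun _ => c) 0 x.
Proof. exists 0. split; [lra|]. intros y. replace (c - c - 0 * (y - x)) with 0 by ring. rewrite Rabs_R0. nra. Qed.

Definition Lip (f : R -> R) x := exists K, 0 <= K /\ forall y, Rabs (f y - f x) <= K * Rabs (y - x).

Lemma Lip_cont f x : Lip f x -> continuous f x.
Proof.
  intros [K [hK H]]. apply continuity_pt_filterlim.
  unfold continuity_pt, continue_in, limit1_in, limit_in. intros eps heps.
  exists (eps / (K + 1)). split. apply Rdiv_lt_0_compat; lra.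
  intros y [_ hy]. simpl in *. unfold R_dist in *.
  eapply Rle_lt_trans; [apply H|].
  assert (Rabs (y - x) * (K + 1) < eps) by (apply Rmult_lt_reg_r with (/ (K+1)); [apply Rinv_0_lt_compat; lra|];
     rewrite Rmult_assoc, Rinv_r by lra; lra).
  pose proof (Rabs_pos (y - x)). nra.
Qed.

Lemma Lip_plus f g x : Lip f x -> Lip g x -> Lip (fun t => f t + g t) x.
Proof.
  intros [M1 [h1 H1]] [M2 [h2 H2]]. exists (M1 + M2). split; [lra|]. intros y.
  replace (f y + g y - (f x + g x)) with ((f y - f x) + (g y - g x)) by ring.
  eapply Rle_trans; [apply Rabs_triang|]. specialize (H1 y); specialize (H2 y). nra.
Qed.

Lemma Lip_const c x : Lip (fun _ => c) x.
Proof. exists 0. split; [lra|]. intros y. replace (c - c) with 0 by ring. rewrite Rabs_R0. pose proof (Rabs_pos (y-x)). nra. Qed.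

Lemma cl_lip x y : Rabs (cl y - cl x) <= Rabs (y - x).
Proof.
  destruct (cl_cases x) as [[hx ex]|[[hx ex]|[hx ex]]]; rewrite ex;
  destruct (cl_cases y) as [[hy ey]|[[hy ey]|[hy ey]]]; rewrite ey;
  unfold Rabs; repeat destruct Rcase_abs; lra.
Qed.

Lemma cl_01 x : 0 <= cl x <= 1.
Proof. destruct (cl_cases x) as [[hx ex]|[[hx ex]|[hx ex]]]; rewrite ex; lra. Qed.

Lemma Sd_lip x y : Rabs (Sdm y - Sdm x) <= 6 * Rabs (y - x).
Proof.
  unfold Sdm. pose proof (cl_lip x y). pose proof (cl_01 x). pose proof (cl_01 y).
  replace (6 * cl y - 6 * cl y ^ 2 - (6 * cl x - 6 * cl x ^ 2)) with
    (6 * (cl y - cl x) * (1 - cl y - cl x)) by ring.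
  rewrite !Rabs_mult. rewrite (Rabs_right 6) by lra.
  assert (Rabs (1 - cl y - cl x) <= 1) by (apply Rabs_le; lra).
  pose proof (Rabs_pos (cl y - cl x)). pose proof (Rabs_pos (1 - cl y - cl x)). nra.
Qed.

Lemma S_01 x : 0 <= Sm x <= 1.
Proof. unfold Sm. pose proof (cl_01 x). assert (0 <= cl x ^ 2 * (1 - cl x)) by (apply Rmult_le_pos; [apply pow2_ge_0|lra]).
  assert (0 <= (1 - cl x)^2 * (1 + 2 * cl x)) by (apply Rmult_le_pos; [apply pow2_ge_0|lra]).
  assert (0 <= cl x ^ 2) by apply pow2_ge_0. split; nra. Qed.
Lemma Sd_ge0 x : 0 <= Sdm x.
Proof. unfold Sdm. pose proof (cl_01 x). nra. Qed.
Lemma S_le0 x : x <= 0 -> Sm x = 0.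
Proof. intros h. unfold Sm. destruct (cl_cases x) as [[hx ex]|[[hx ex]|[hx ex]]]; rewrite ex; try lra.
  assert (x = 0) by lra. subst. ring. Qed.
Lemma S_ge1 x : 1 <= x -> Sm x = 1.
Proof. intros h. unfold Sm. destruct (cl_cases x) as [[hx ex]|[[hx ex]|[hx ex]]]; rewrite ex; try lra.
  all: try (assert (x = 1) by lra; subst); ring. Qed.
Lemma Sd_out x : x <= 0 \/ 1 <= x -> Sdm x = 0.
Proof. intros h. unfold Sdm. destruct (cl_cases x) as [[hx ex]|[[hx ex]|[hx ex]]]; rewrite ex; try ring.
  assert (x = 0 \/ x = 1) as [-> | ->] by lra; ring. Qed.

Lemma QB_S b c e x : QB (fun t => b * Sm (c * t + e)) (b * c * Sdm (c * x + e)) x.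
Proof.
  exists (Rabs b * 3 * c ^ 2). split. pose proof (Rabs_pos b). pose proof (pow2_ge_0 c). nra.
  intros y. pose proof (S_quad (c * x + e) (c * y + e)) as H.
  replace (b * Sm (c * y + e) - b * Sm (c * x + e) - b * c * Sdm (c * x + e) * (y - x)) with
    (b * (Sm (c * y + e) - Sm (c * x + e) - Sdm (c * x + e) * (c * y + e - (c * x + e)))) by ring.
  rewrite Rabs_mult. replace ((c * y + e - (c * x + e)) ^ 2) with (c^2 * (y - x)^2) in H by ring.
  pose proof (Rabs_pos b). 
  replace (Rabs b * 3 * c ^ 2 * (y - x) ^ 2) with (Rabs b * (3 * (c ^ 2 * (y - x) ^ 2))) by ring.
  apply Rmult_le_compat_l; auto.
Qed.

Lemma Lip_Sd k c e x : Lip (fun t => k * Sdm (c * t + e)) x.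
Proof.
  exists (Rabs k * 6 * Rabs c). split. pose proof (Rabs_pos k). pose proof (Rabs_pos c). nra.
  intros y. replace (k * Sdm (c * y + e) - k * Sdm (c * x + e)) with (k * (Sdm (c * y + e) - Sdm (c * x + e))) by ring.
  rewrite Rabs_mult. pose proof (Sd_lip (c * x + e) (c * y + e)) as H.
  replace (c * y + e - (c * x + e)) with (c * (y - x)) in H by ring. rewrite Rabs_mult in H.
  pose proof (Rabs_pos k).
  replace (Rabs k * 6 * Rabs c * Rabs (y - x)) with (Rabs k * (6 * (Rabs c * Rabs (y - x)))) by ring.
  apply Rmult_le_compat_l; auto.
Qed.

Lemma cont_plus (f g : R -> R) (x : R) : continuous f x -> continuous g x -> continuous (fun t => f t + g t) x.
Proof. intros; exact (continuous_plus f g x H H0). Qed.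
Lemma cont_mult (f g : R -> R) (x : R) : continuous f x -> continuous g x -> continuous (fun t => f t * g t) x.
Proof. intros; exact (continuous_mult f g x H H0). Qed.
Lemma cont_const (c x : R) : @continuous R_UniformSpace R_UniformSpace (fun _ : R => c) x.
Proof. apply continuous_const. Qed.
Lemma cont_pow2 (f : R -> R) (x : R) : continuous f x -> continuous (fun t => f t ^ 2) x.
Proof. intros H. apply (continuous_ext (fun t => f t * f t)). intros t; change (f t * f t = f t ^ 2); ring. now apply cont_mult. Qed.

Lemma RInt_upper (f G g : R -> R) (a b : R) : a <= b -> ex_RInt f a b ->
  (forall x, is_derive G x (g x)) -> (forall x, continuous g x) ->
  (forall x, a <= x <= b -> f x <= g x) -> RInt f a b <= G b - G a.
Proof.
  intros hab hf hG hg hle.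
  assert (hi : is_RInt g a b (minus (G b) (G a))) by (apply (@is_RInt_derive R_CompleteNormedModule); auto).
  assert (RInt g a b = G b - G a) by (rewrite (@is_RInt_unique R_CompleteNormedModule _ _ _ _ hi); reflexivity).
  rewrite <- H. apply RInt_le; auto. eexists; eauto. intros; apply hle; lra.
Qed.

Lemma RInt_lower (f G g : R -> R) (a b : R) : a <= b -> ex_RInt f a b ->
  (forall x, is_derive G x (g x)) -> (forall x, continuous g x) ->
  (forall x, a <= x <= b -> g x <= f x) -> G b - G a <= RInt f a b.
Proof.
  intros hab hf hG hg hle.
  assert (hi : is_RInt g a b (minus (G b) (G a))) by (apply (@is_RInt_derive R_CompleteNormedModule); auto).
  assert (RInt g a b = G b - G a) by (rewrite (@is_RInt_unique R_CompleteNormedModule _ _ _ _ hi); reflexivity).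
  rewrite <- H. apply RInt_le; auto. eexists; eauto. intros; apply hle; lra.
Qed.

Lemma exp_le a b : a <= b -> exp a <= exp b.
Proof. intros [h|h]. left; now apply exp_increasing. subst; lra. Qed.

Lemma Rpower_anti x y e : 0 < x <= y -> e <= 0 -> Rpower y e <= Rpower x e.
Proof. intros hx he. unfold Rpower. apply exp_le. pose proof (ln_le x y (proj1 hx) (proj2 hx)). nra. Qed.

Lemma Rpower_ge1 x e : 1 <= x -> 0 <= e -> 1 <= Rpower x e.
Proof. intros hx he. unfold Rpower. rewrite <- exp_0. apply exp_le.
  pose proof (ln_le 1 x ltac:(lra) hx). rewrite ln_1 in H. nra. Qed.

Lemma Rpower_pos x e : 0 < Rpower x e.
Proof. unfold Rpower. apply exp_pos. Qed.

Lemma sq_Q x al : 0 < x -> Rpower x (-4 * al) = Rpower x (-2 * al) * Rpower x (-2 * al).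
Proof. intros. rewrite <- Rpower_plus. f_equal. ring. Qed.

Lemma integrand_ge1 x al a b : 0 < x -> Rabs a <= sqrt (a ^ 2 + Rpower x (-4 * al) * b ^ 2).
Proof.
  intros hx. rewrite <- (sqrt_pow2 (Rabs a)) by apply Rabs_pos. apply sqrt_le_1_alt.
  rewrite <- Rsqr_pow2, <- Rsqr_abs, Rsqr_pow2.
  pose proof (Rpower_pos x (-4*al)). pose proof (pow2_ge_0 b). nra.
Qed.

Lemma integrand_ge2 x al a b : 0 < x -> Rpower x (-2 * al) * Rabs b <= sqrt (a ^ 2 + Rpower x (-4 * al) * b ^ 2).
Proof.
  intros hx. pose proof (Rpower_pos x (-2*al)).
  rewrite <- (sqrt_pow2 (Rpower x (-2 * al) * Rabs b)) by (pose proof (Rabs_pos b); nra).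
  apply sqrt_le_1_alt. rewrite sq_Q by auto.
  assert (Rabs b ^ 2 = b ^ 2) by (rewrite <- !Rsqr_pow2; symmetry; apply Rsqr_abs).
  pose proof (pow2_ge_0 a). 
  replace ((Rpower x (-2 * al) * Rabs b) ^ 2) with (Rpower x (-2 * al) * Rpower x (-2 * al) * (Rabs b ^ 2)) by ring.
  rewrite H0. lra.
Qed.

Lemma integrand_le x al a b : 0 < x -> sqrt (a ^ 2 + Rpower x (-4 * al) * b ^ 2) <= Rabs a + Rpower x (-2 * al) * Rabs b.
Proof.
  intros hx. pose proof (Rpower_pos x (-2*al)). pose proof (Rabs_pos a). pose proof (Rabs_pos b).
  rewrite <- (sqrt_pow2 (Rabs a + Rpower x (-2 * al) * Rabs b)) by nra.
  apply sqrt_le_1_alt. rewrite sq_Q by auto.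
  assert (Rabs b ^ 2 = b ^ 2) by (rewrite <- !Rsqr_pow2; symmetry; apply Rsqr_abs).
  assert (Rabs a ^ 2 = a ^ 2) by (rewrite <- !Rsqr_pow2; symmetry; apply Rsqr_abs).
  rewrite <- H2, <- H3. pose proof (Rmult_le_pos _ _ (Rmult_le_pos _ _ H0 (Rlt_le _ _ H)) H1). nra.
Qed.

Lemma integrand_ex (alpha : R) (rc vc : R -> R) : is_C1 rc -> is_C1 vc -> (forall t, 0 <= t <= 1 -> 0 < rc t) ->
  ex_RInt (fun t => sqrt (Derive rc t ^ 2 + Rpower (rc t) (-4 * alpha) * Derive vc t ^ 2)) 0 1.
Proof.
  intros [dr cr] [dv cv] pos. apply (@ex_RInt_continuous R_CompleteNormedModule).
  intros z hz. rewrite Rmin_left in hz by lra. rewrite Rmax_right in hz by lra.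
  apply continuous_sqrt_comp. apply cont_plus. apply cont_pow2; auto.
  apply cont_mult; [|apply cont_pow2; auto].
  unfold Rpower. apply continuous_exp_comp. apply cont_mult. apply cont_const.
  apply (continuous_comp rc ln). apply (@ex_derive_continuous R_AbsRing R_NormedModule); auto.
  apply continuous_ln. auto.
Qed.

Lemma C1_of (f df : R -> R) : (forall x, QB f (df x) x) -> (forall x, Lip df x) ->
  is_C1 f /\ forall x, Derive f x = df x.
Proof.
  intros hq hl. assert (hd : forall x, Derive f x = df x).
  { intros x. apply is_derive_unique. apply QB_derive; auto. }
  split; auto. split.
  - intros x. exists (df x). apply QB_derive; auto.
  - intros x. apply (continuous_ext df). intros; symmetry; auto. apply Lip_cont; auto.
Qed.

Lemma glb_bounds (E : R -> Prop) (m M : R) : (exists x, E x /\ x <= M) -> (forall x, E x -> m <= x) ->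
  m <= real (Glb_Rbar E) <= M.
Proof.
  intros [x0 [hx0 hxM]] hlb. destruct (Glb_Rbar_correct E) as [lb glb].
  specialize (lb x0 hx0). assert (hm : Rbar_le (Finite m) (Glb_Rbar E)) by (apply glb; intros x hx; simpl; auto).
  destruct (Glb_Rbar E); simpl in *; try contradiction; lra.
Qed.

Lemma lim_bounds (u : nat -> R) (m M : R) : (forall n, m <= u n <= M) -> m <= real (Lim_seq u) <= M.
Proof.
  intros h.
  assert (h1 : Rbar_le (Lim_seq (fun _ => m)) (Lim_seq u)) by (apply Lim_seq_le_loc; exists 0%nat; intros; apply h).
  assert (h2 : Rbar_le (Lim_seq u) (Lim_seq (fun _ => M))) by (apply Lim_seq_le_loc; exists 0%nat; intros; apply h).
  rewrite Lim_seq_const in h1, h2.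
  destruct (Lim_seq u); simpl in *; try contradiction; lra.
Qed.

Definition rcf (r0 H t : R) := r0 + ((H - r0) * Sm (3 * t + 0) + (-(H - r0)) * Sm (3 * t + -2)).
Definition rcd (r0 H t : R) := (H - r0) * 3 * Sdm (3 * t + 0) + (-(H - r0)) * 3 * Sdm (3 * t + -2).
Definition vcf (v0 L t : R) := v0 + (-L) * Sm (3 * t + -1).
Definition vcd (L t : R) := (-L) * 3 * Sdm (3 * t + -1).
Definition Gf (r0 H c t : R) := ((H - r0) * Sm (3 * t + 0) + (H - r0) * Sm (3 * t + -2)) + c * Sm (3 * t + -1).
Definition Gd (r0 H c t : R) := ((H - r0) * 3 * Sdm (3 * t + 0) + (H - r0) * 3 * Sdm (3 * t + -2)) + c * 3 * Sdm (3 * t + -1).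

Lemma rc_QB r0 H x : QB (rcf r0 H) (rcd r0 H x) x.
Proof.
  unfold rcf. replace (rcd r0 H x) with (0 + ((H - r0) * 3 * Sdm (3 * x + 0) + (-(H - r0)) * 3 * Sdm (3 * x + -2))) by (unfold rcd; ring).
  apply (QB_plus (fun _ => r0) (fun t => (H - r0) * Sm (3 * t + 0) + (-(H - r0)) * Sm (3 * t + -2))).
  apply QB_const.
  apply (QB_plus (fun t => (H - r0) * Sm (3 * t + 0)) (fun t => (-(H - r0)) * Sm (3 * t + -2))); apply QB_S.
Qed.

Lemma rc_Lip r0 H x : Lip (rcd r0 H) x.
Proof.
  unfold rcd. apply (Lip_plus (fun t => (H - r0) * 3 * Sdm (3 * t + 0)) (fun t => (-(H - r0)) * 3 * Sdm (3 * t + -2))); apply Lip_Sd.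
Qed.

Lemma vc_QB v0 L x : QB (vcf v0 L) (vcd L x) x.
Proof.
  unfold vcf. replace (vcd L x) with (0 + (-L) * 3 * Sdm (3 * x + -1)) by (unfold vcd; ring).
  apply (QB_plus (fun _ => v0) (fun t => (-L) * Sm (3 * t + -1))). apply QB_const. apply QB_S.
Qed.

Lemma vc_Lip L x : Lip (vcd L) x.
Proof. unfold vcd. apply Lip_Sd. Qed.

Lemma G_QB r0 H c x : QB (Gf r0 H c) (Gd r0 H c x) x.
Proof.
  unfold Gf, Gd.
  apply (QB_plus (fun t => (H - r0) * Sm (3 * t + 0) + (H - r0) * Sm (3 * t + -2)) (fun t => c * Sm (3 * t + -1))).
  apply (QB_plus (fun t => (H - r0) * Sm (3 * t + 0)) (fun t => (H - r0) * Sm (3 * t + -2))); apply QB_S.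
  apply QB_S.
Qed.

Lemma G_Lip r0 H c x : Lip (Gd r0 H c) x.
Proof.
  unfold Gd.
  apply (Lip_plus (fun t => (H - r0) * 3 * Sdm (3 * t + 0) + (H - r0) * 3 * Sdm (3 * t + -2)) (fun t => c * 3 * Sdm (3 * t + -1))).
  apply (Lip_plus (fun t => (H - r0) * 3 * Sdm (3 * t + 0)) (fun t => (H - r0) * 3 * Sdm (3 * t + -2))); apply Lip_Sd.
  apply Lip_Sd.
Qed.

Lemma rc_ge r0 H t : r0 <= H -> r0 <= rcf r0 H t.
Proof.
  intros h. unfold rcf.
  assert (Sm (3 * t + -2) <= Sm (3 * t + 0)).
  { destruct (Rle_dec (3 * t + -2) 0). rewrite S_le0 by auto. apply S_01.
    rewrite (S_ge1 (3 * t + 0)) by lra. apply S_01. }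
  nra.
Qed.

Lemma upper_curve (alpha r0 v0 L Lam : R) : 0 < alpha -> 0 < r0 -> 0 < Lam -> 0 <= L ->
  Rpower Lam (-2 * alpha) * L = Lam ->
  adm_curve (r0, v0) (r0, v0 - L) (rcf r0 (Rmax Lam r0)) (vcf v0 L) /\
  g_length alpha (rcf r0 (Rmax Lam r0)) (vcf v0 L) <= 3 * Lam.
Proof.
  intros ha hr0 hLam hL hkey. set (H := Rmax Lam r0).
  assert (hH1 : Lam <= H) by apply Rmax_l. assert (hH2 : r0 <= H) by apply Rmax_r.
  assert (hH3 : H - r0 <= Lam) by (unfold H; unfold Rmax; destruct Rle_dec; lra).
  destruct (C1_of (rcf r0 H) (rcd r0 H) (rc_QB r0 H) (rc_Lip r0 H)) as [rC1 rD].
  destruct (C1_of (vcf v0 L) (vcd L) (vc_QB v0 L) (vc_Lip L)) as [vC1 vD].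
  assert (pos : forall t, 0 < rcf r0 H t) by (intros t; pose proof (rc_ge r0 H t hH2); lra).
  split.
  - unfold adm_curve. split; [exact rC1|]. split; [exact vC1|]. split; [intros; apply pos|].
    unfold rcf, vcf; simpl. rewrite (S_le0 (3 * 0 + 0)), (S_le0 (3 * 0 + -2)), (S_le0 (3 * 0 + -1)) by lra.
    rewrite (S_ge1 (3 * 1 + 0)), (S_ge1 (3 * 1 + -2)), (S_ge1 (3 * 1 + -1)) by lra.
    repeat split; ring.
  - unfold g_length.
    set (c := Rpower Lam (-2 * alpha) * L).
    eapply Rle_trans.
    + apply (RInt_upper _ (Gf r0 H c) (Gd r0 H c) 0 1). lra.
      apply integrand_ex; [exact rC1|exact vC1|intros; apply pos].
      intros y. apply QB_derive, G_QB. intros y. apply Lip_cont, G_Lip.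
      intros x hx. rewrite rD, vD.
      eapply Rle_trans; [apply integrand_le; auto|].
      unfold Gd, rcd, vcd.
      pose proof (Sd_ge0 (3 * x + 0)). pose proof (Sd_ge0 (3 * x + -2)). pose proof (Sd_ge0 (3 * x + -1)).
      apply Rplus_le_compat.
      * apply Rabs_le. split; nra.
      * destruct (Rle_dec (3 * x + -1) 0) as [h1|h1].
        { rewrite (Sd_out (3 * x + -1)) by auto. rewrite !Rmult_0_r, Rabs_R0. lra. }
        destruct (Rle_dec 1 (3 * x + -1)) as [h2|h2].
        { rewrite (Sd_out (3 * x + -1)) by auto. rewrite !Rmult_0_r, Rabs_R0. lra. }
        assert (hr : rcf r0 H x = H).
        { unfold rcf. rewrite (S_ge1 (3 * x + 0)) by lra. rewrite (S_le0 (3 * x + -2)) by lra. ring. }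
        rewrite hr.
        rewrite Rabs_mult, Rabs_mult, Rabs_Ropp, (Rabs_right 3) by lra.
        rewrite (Rabs_right L) by lra. rewrite (Rabs_right (Sdm _)) by lra.
        pose proof (Rpower_anti Lam H (-2 * alpha) ltac:(lra) ltac:(lra)).
        unfold c. pose proof (Rpower_pos H (-2 * alpha)).
        assert (0 <= L * 3 * Sdm (3 * x + -1)) by nra.
        replace (Rpower Lam (-2 * alpha) * L * 3 * Sdm (3 * x + -1)) with (Rpower Lam (-2 * alpha) * (L * 3 * Sdm (3 * x + -1))) by ring.
        replace (Rpower H (-2 * alpha) * (L * 3 * Sdm (3 * x + -1))) with (Rpower H (-2 * alpha) * (L * 3 * Sdm (3 * x + -1))) by ring.
        nra.
    + unfold Gf. rewrite (S_le0 (3 * 0 + 0)), (S_le0 (3 * 0 + -2)), (S_le0 (3 * 0 + -1)) by lra.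
      rewrite (S_ge1 (3 * 1 + 0)), (S_ge1 (3 * 1 + -2)), (S_ge1 (3 * 1 + -1)) by lra.
      unfold c. rewrite hkey. lra.
Qed.

Lemma Rpower_1base e : Rpower 1 e = 1.
Proof. unfold Rpower. rewrite ln_1, Rmult_0_r. apply exp_0. Qed.

Lemma lower_curve (alpha r r0 v L Lam : R) (rc vc : R -> R) : 0 < alpha -> 0 <= r -> 0 < r0 <= r + 1 ->
  1 <= Lam -> Rpower Lam (-2 * alpha) * L = Lam ->
  adm_curve (r0, v + L) (r0, v) rc vc ->
  Rpower (2 * r + 3) (-2 * alpha) * Lam <= g_length alpha rc vc.
Proof.
  intros ha hr hr0 hLam hkey [rC1 [vC1 [pos [e1 [e2 [e3 e4]]]]]]. simpl in e1, e2, e3, e4.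
  set (C := Rpower (2 * r + 3) (-2 * alpha)).
  assert (hC1 : C <= 1) by (rewrite <- (Rpower_1base (-2 * alpha)); apply Rpower_anti; lra).
  assert (hC0 : 0 < C) by apply Rpower_pos.
  set (K := Lam + 2 * (r + 1)).
  pose proof (integrand_ex alpha rc vc rC1 vC1 pos) as hf.
  unfold g_length.
  set (f := fun t => sqrt (Derive rc t ^ 2 + Rpower (rc t) (-4 * alpha) * Derive vc t ^ 2)).
  fold f in hf.
  destruct rC1 as [dr cr]. destruct vC1 as [dv cv].
  destruct (Classical_Prop.classic (exists t0, 0 <= t0 <= 1 /\ K < rc t0)) as [[t0 [ht0 hK]]|hno].
  - assert (h1 : ex_RInt f 0 t0) by (apply (@ex_RInt_Chasles_1 R_CompleteNormedModule) with 1; auto).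
    assert (h2 : ex_RInt f t0 1) by (apply (@ex_RInt_Chasles_2 R_CompleteNormedModule) with 0; auto).
    rewrite <- (@RInt_Chasles R_CompleteNormedModule f 0 t0 1 h1 h2).
    change (plus (RInt f 0 t0) (RInt f t0 1)) with (RInt f 0 t0 + RInt f t0 1).
    assert (l1 : rc t0 - rc 0 <= RInt f 0 t0).
    { apply (RInt_lower f rc (Derive rc)); try lra; auto.
      intros x; apply Derive_correct; auto.
      intros x hx. unfold f. eapply Rle_trans; [apply Rle_abs|]. apply integrand_ge1. apply pos; lra. }
    assert (l2 : -1 * rc 1 - -1 * rc t0 <= RInt f t0 1).
    { apply (RInt_lower f (fun t => -1 * rc t) (fun t => -1 * Derive rc t)); try lra; auto.
      intros x; apply is_derive_scal, Derive_correct; auto.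
      intros x; apply cont_mult; auto. apply cont_const.
      intros x hx. unfold f. eapply Rle_trans; [|apply integrand_ge1]. 
      rewrite <- Rabs_Ropp. replace (-1 * Derive rc x) with (- Derive rc x) by ring. apply Rle_abs. apply pos; lra. }
    unfold K in hK. nra.
  - assert (hle : forall t, 0 <= t <= 1 -> rc t <= K).
    { intros t ht. apply Rnot_lt_le. intros hc. apply hno. exists t; auto. }
    set (cK := Rpower K (-2 * alpha)).
    assert (l : (- cK) * vc 1 - (- cK) * vc 0 <= RInt f 0 1).
    { apply (RInt_lower f (fun t => (- cK) * vc t) (fun t => (- cK) * Derive vc t)); try lra; auto.
      intros x; apply is_derive_scal, Derive_correct; auto.
      intros x; apply cont_mult; auto. apply cont_const.
      intros x hx. unfold f. eapply Rle_trans; [|apply integrand_ge2]. 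
      assert (cK <= Rpower (rc x) (-2 * alpha)) by (apply Rpower_anti; [split; [apply pos|apply hle]; lra|lra]).
      pose proof (Rabs_pos (Derive vc x)). pose proof (Rpower_pos K (-2*alpha)).
      assert (- Derive vc x <= Rabs (Derive vc x)) by (rewrite <- Rabs_Ropp; apply Rle_abs).
      fold cK in H1. nra. apply pos; lra. }
    rewrite e2, e4 in l.
    assert (hK : K <= (2 * r + 3) * Lam) by (unfold K; nra).
    assert (hcK : C * Rpower Lam (-2 * alpha) <= cK).
    { unfold C, cK. rewrite Rpower_mult_distr by lra. apply Rpower_anti; [split|]; unfold K; nra. }
    assert (0 <= L).
    { pose proof (Rpower_pos Lam (-2 * alpha)). nra. }
    assert (C * Lam = C * Rpower Lam (-2 * alpha) * L) by (rewrite (Rmult_assoc C), hkey; reflexivity).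
    nra.
Qed.

Theorem lemma3p11 (alpha : R) (halpha : 0 < alpha) :
  exists C : R -> R,
    (forall r, 0 <= r -> 0 < C r) /\
    (forall (r v : R) (l : nat), 0 <= r -> (1 <= l)%nat ->
       C r * Rpower (INR l) (1 / (1 + 2 * alpha))
         <= distY alpha (gamma_pow l (r, v)) (r, v)
       /\ distY alpha (gamma_pow l (r, v)) (r, v)
         <= 3 * Rpower (INR l) (1 / (1 + 2 * alpha))).
Proof.
  exists (fun r => Rpower (2 * r + 3) (-2 * alpha)). split.
  { intros; apply Rpower_pos. }
  intros r v l hr hl.
  set (Lam := Rpower (INR l) (1 / (1 + 2 * alpha))).
  assert (hl1 : 1 <= INR l) by (apply le_INR in hl; simpl in hl; exact hl).
  assert (hLam : 1 <= Lam) by (apply Rpower_ge1; auto; apply Rlt_le, Rdiv_lt_0_compat; lra).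
  assert (hkey : Rpower Lam (-2 * alpha) * INR l = Lam).
  { assert (INR l = Rpower Lam (1 + 2 * alpha)).
    { unfold Lam. rewrite Rpower_mult. replace (1 / (1 + 2 * alpha) * (1 + 2 * alpha)) with 1 by (field; lra).
      rewrite Rpower_1 by lra. reflexivity. }
    rewrite H at 1. rewrite <- Rpower_plus. replace (-2 * alpha + (1 + 2 * alpha)) with 1 by ring.
    apply Rpower_1; lra. }
  unfold distY, gamma_pow. simpl.
  apply lim_bounds. intros n.
  assert (hn1 : 0 < / INR (S n)) by (apply Rinv_0_lt_compat, lt_0_INR; lia).
  assert (hn2 : / INR (S n) <= 1).
  { rewrite <- Rinv_1. apply Rinv_le_contravar; [lra|]. rewrite S_INR. pose proof (pos_INR n). lra. }
  set (r0 := r + / INR (S n)).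
  unfold dist0. apply glb_bounds.
  - destruct (upper_curve alpha r0 (v + INR l) (INR l) Lam halpha ltac:(unfold r0; lra) ltac:(lra) ltac:(lra) hkey) as [hadm hlen].
    replace (v + INR l - INR l) with v in hadm by ring.
    eexists. split; [|exact hlen]. do 2 eexists. split; [exact hadm|reflexivity].
  - intros x [rc [vc [hadm ->]]]. apply (lower_curve alpha r r0 v (INR l) Lam rc vc); auto.
    unfold r0; lra.
Qed.
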